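(* Let $H=(V,E)$ be a hypergraph, and let $L$ be a graph satisfying one of the following: (a) $\deg_H(v)\le 2$ for all $v\in V$ and $L=\mathcal L(H)$; or (b) $L=\mathcal L_2^*(H)$ and $L$ is bipartite; or (c) $L=\mathcal L_3^*(H)$. Then $H$ is eulerian whenever $L$ has a Hamilton cycle, and $H$ is quasi-eulerian whenever $L$ has a $2$-factor. Moreover, in cases (b) and (c), $H$ is quasi-eulerian whenever $L$ has a spanning subgraph each of whose connected components is $1$-regular or $2$-regular.
   Context: A hypergraph $H=(V,E)$ consists of a finite nonempty vertex set $V$, a finite edge set $E$ disjoint from $V$, and an incidence function assigning to each edge $e\in E$ a subset of $V$ (also denoted $e$); distinct edges may have the same vertex set. Hypergraphs are assumed to have no empty edges. The degree $\deg_H(v)$ is the number of edges containing $v$. A walk is a sequence $W=v_0e_1v_1e_2\cdots e_kv_k$ with $v_i\in V$, $e_i\in E$, such that for each $i$, $v_{i-1}\ne v_i$ and $v_{i-1},v_i\in e_i$; the $v_i$ are its anchors. $W$ is closed if $k\ge 2$ and $v_0=v_k$; it is a strict trail if $e_1,\dots,e_k$ are pairwise distinct. An Euler tour of $H$ is a closed strict trail traversing every edge of $H$; an Euler family of $H$ is a family of closed strict trails such that every edge of $H$ lies in exactly one trail and no two trails have a common anchor. $H$ is eulerian (quasi-eulerian) if it has an Euler tour (Euler family). The intersection graph $\mathcal L(H)$ is the simple graph with vertex set $E$ in which distinct $e,e'$ are adjacent iff $e\cap e'\ne\emptyset$; for a positive integer $\ell$, $\mathcal L_\ell^*(H)$ is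 the simple graph with vertex set $E$ in which distinct $e,e'$ are adjacent iff $|e\cap e'|\ge \ell$. *)

(* Defs.v *)
From mathcomp Require Import all_boot.
Set Implicit Arguments. Unset Strict Implicit. Unset Printing Implicit Defensive.

Section Hypergraph.
Variables (V E : finType) (inc : E -> {set V}).

Definition hdeg (v : V) : nat := #|[set e : E | v \in inc e]|.

(* A walk v0 e1 v1 ... ek vk is encoded by its start v0 and the sequence
   [:: (e1,v1); ...; (ek,vk)]. *)
Fixpoint is_walk (v : V) (s : seq (E * V)) : bool :=
  match s with
  | [::] => true
  | (e, w) :: s' => [&& v != w, v \in inc e, w \in inc e & is_walk w s']
  end.

Definition walk_edges (s : seq (E * V)) : seq E := map fst s.
Definition anchors (v : V) (s : seq (E * V)) : seq V := v :: map snd s.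

Definition closed_strict_trail (v : V) (s : seq (E * V)) : bool :=
  [&& is_walk v s, 2 <= size s, last v (map snd s) == v & uniq (walk_edges s)].

Definition euler_tour (v : V) (s : seq (E * V)) : Prop :=
  closed_strict_trail v s /\ forall e : E, e \in walk_edges s.

Definition eulerian : Prop := exists v s, euler_tour v s.

Definition euler_family (F : seq (V * seq (E * V))) : Prop :=
  [/\ all (fun t => closed_strict_trail t.1 t.2) F,
      forall e : E, count (fun t => e \in walk_edges t.2) F = 1
    & pairwise (fun t1 t2 => [disjoint anchors t1.1 t1.2 & anchors t2.1 t2.2]) F].

Definition quasi_eulerian : Prop := exists F, euler_family F.

Definition intersection_graph : rel E :=
  fun e f => (e != f) && (inc e :&: inc f != set0).

Definition Lstar (l : nat) : rel E :=
  fun e f => (e != f) && (l <= #|inc e :&: inc f|).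
End Hypergraph.

Section Graphs.
Variables (T : finType) (G : rel T).

Definition bipartite : Prop := exists c : T -> bool, forall x y, G x y -> c x != c y.

Definition hamiltonian : Prop :=
  exists s : seq T, [/\ uniq s, 3 <= size s, forall x, x \in s & cycle G s].

Definition spanning_subgraph (F : rel T) : Prop :=
  symmetric F /\ forall x y, F x y -> G x y.

Definition sdeg (F : rel T) (x : T) : nat := #|[set y | F x y]|.

Definition has_2factor : Prop :=
  exists F : rel T, spanning_subgraph F /\ forall x, sdeg F x = 2.

Definition has_12factor : Prop :=
  exists F : rel T, [/\ spanning_subgraph F,
    forall x, sdeg F x = 1 \/ sdeg F x = 2
  & forall x y, connect F x y -> sdeg F x = sdeg F y].
End Graphs.

(* Main.v *)
Require Import Defs.
From mathcomp Require Import all_boot.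
From mathcomp Require Import zify.
Set Implicit Arguments. Unset Strict Implicit. Unset Printing Implicit Defensive.


Section Color.
Variable (V : finType).

Lemma other (A : {set V}) z : 1 < #|A| -> exists2 y, y \in A & y != z.
Proof.
move=> h; have : 0 < #|A :\ z|.
  move: h; rewrite (cardsD1 z A); case: (z \in A) => /=; lia.
by case/card_gt0P => y; rewrite !inE => /andP[? ?]; exists y.
Qed.

Lemma other2 (A : {set V}) z1 z2 : 2 < #|A| -> exists y, [/\ y \in A, y != z1 & y != z2].
Proof.
move=> h; have : 0 < #|A :\ z1 :\ z2|.
  move: h; rewrite (cardsD1 z1 A) (cardsD1 z2 (A :\ z1)); case: (z1 \in A); case: (z2 \in _) => /=; lia.
by case/card_gt0P => y; rewrite !inE => /and3P[? ? ?]; exists y.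
Qed.

Fixpoint greedy (L : nat -> {set V}) (x : V) (i : nat) : V :=
  match i with 0 => x | i'.+1 => odflt x [pick y in L i'.+1 | y != greedy L x i'] end.

Lemma greedyP (L : nat -> {set V}) (x : V) i : 1 < #|L i.+1| ->
  greedy L x i.+1 \in L i.+1 /\ greedy L x i.+1 != greedy L x i.
Proof.
move=> h /=; case: pickP => [y /andP[] //|H].
have [y Hy Hy'] := other (greedy L x i) h.
by move: (H y); rewrite Hy Hy'.
Qed.

Definition goodf k (L : nat -> {set V}) (f : nat -> V) :=
  (forall i, i < k -> f i \in L i) /\ (forall i, i < k -> f i != f (i.+1 %% k)).

Lemma color_base k (L : nat -> {set V}) x : 0 < k -> (forall i, 0 < i < k -> 1 < #|L i|) ->
  x \in L 0 -> x \notin L k.-1 -> exists f, goodf k L f.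
Proof.
move=> k0 hL x0 x1; exists (greedy L x).
have mem : forall i, i < k -> greedy L x i \in L i.
  by case=> [//|i] ik; case: (greedyP x (hL i.+1 ltac:(lia))).
split=> // i ik.
case: (ltnP i.+1 k) => h.
  rewrite modn_small //; case: (greedyP x (hL i.+1 ltac:(lia))).
  by move=> _; rewrite eq_sym.
have -> : i = k.-1 by lia.
have -> : k.-1.+1 = k by lia.
rewrite modnn /=; apply/negP => /eqP E.
by move: (mem k.-1 ltac:(lia)); rewrite E (negbTE x1).
Qed.

Lemma color3 k (L : nat -> {set V}) : 1 < k -> (forall i, i < k -> 2 < #|L i|) -> exists f, goodf k L f.
Proof.
move=> k1 hL.
have [x x0] : exists x, x \in L 0.
  by apply/card_gt0P; have := hL 0 ltac:(lia); lia.
have [y [y1 y2 y3]] := other2 (greedy L x k.-2) x (hL k.-1 ltac:(lia)).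
exists (fun i => if i == k.-1 then y else greedy L x i).
have mem : forall i, i < k -> greedy L x i \in L i.
  case=> [//|i] ik; have h2 := hL i.+1 ik.
  by case: (greedyP x (_ : 1 < #|L i.+1|)) => //; lia.
split=> i ik.
  by case: eqP => [->|]; last by rewrite mem.
case: (ltnP i.+1 k) => h.
  rewrite modn_small //.
  case: (eqVneq i k.-1) => [|ne]; first lia.
  case: (eqVneq i.+1 k.-1) => [e|ne'].
    idtac.
    by have -> : i = k.-2 by [lia]; rewrite eq_sym.
  have h2 := hL i.+1 h.
  case: (greedyP x (_ : 1 < #|L i.+1|)) => //; first lia.
  by move=> _; rewrite eq_sym.
have -> : i = k.-1 by lia.
have -> : k.-1.+1 = k by lia.
by rewrite modnn eqxx /= (_ : (0 == k.-1) = false) //; lia.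
Qed.

Lemma color2 k (L : nat -> {set V}) : 0 < k -> ~~ odd k -> (forall i, i < k -> 1 < #|L i|) -> exists f, goodf k L f.
Proof.
move=> k0 ev hL.
case: (boolP [exists i : 'I_k, ~~ (L (i.+1 %% k) \subset L i)]).
  case/existsP => -[i ik] /= /subsetPn [x x1 x2].
  pose m := i.+1 %% k.
  have mk : m < k by rewrite ltn_mod.
  pose L' := fun j => L ((j + m) %% k).
  have [f' [f1 f2]] : exists f', goodf k L' f'.
    apply: (@color_base k L' x k0).
    - by move=> j /andP[_ jk]; apply: hL; rewrite ltn_mod.
    - by rewrite /L' add0n modn_small.
    - rewrite /L' /m modnDmr.
      have -> : k.-1 + i.+1 = i + k by lia.
      by rewrite modnDr modn_small.
  exists (fun j => f' ((j + (k - m)) %% k)); split=> j jk.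
    have := f1 _ (ltn_pmod (j + (k - m)) k0); rewrite /L'.
    have -> // : ((j + (k - m)) %% k + m) %% k = j.
    rewrite modnDml -addnA subnK; last by lia.
    by rewrite modnDr modn_small.
  have := f2 ((j + (k - m)) %% k) (ltn_pmod _ k0).
  have -> : ((j + (k - m)) %% k).+1 %% k = (j + (k - m)).+1 %% k.
    by rewrite -addn1 modnDml addn1.
  by rewrite modnDml addSn.
move=> H.
have H' : forall i, i < k -> L (i.+1 %% k) \subset L i.
  by move=> i ik; apply/negPn; apply: contra H => h; apply/existsP; exists (Ordinal ik).
have hd : forall d, d < k -> L 0 \subset L (k.-1 - d).
  elim=> [|d IH] dk.
    by have := H' k.-1 ltac:(lia); rewrite (_ : k.-1.+1 = k); [rewrite modnn subn0 | lia].
  apply: subset_trans (IH ltac:(lia)) _.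
  have := H' (k.-1 - d.+1) ltac:(lia).
  by rewrite modn_small; [rewrite (_ : (k.-1 - d.+1).+1 = k.-1 - d) //|]; lia.
have sub : forall i, i < k -> L 0 \subset L i.
  by move=> i ik; have := hd (k.-1 - i) ltac:(lia); rewrite (_ : k.-1 - (k.-1 - i) = i) //; lia.
have [a a0] : exists a, a \in L 0.
  by apply/card_gt0P; have := hL 0 k0; lia.
have [b b0 ba] := other a (hL 0 k0).
exists (fun i => if odd i then b else a); split=> i ik.
  by case: (odd i); apply: (subsetP (sub i ik)).
case: (ltnP i.+1 k) => h.
  by rewrite modn_small //= ; case: (odd i) => //; rewrite eq_sym.
have -> : i = k.-1 by lia.
rewrite (_ : k.-1.+1 = k); last lia.
rewrite modnn /= (_ : odd k.-1 = true) //.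
by move: ev k0; clear; case: k => //= k' ; case: (odd k').
Qed.
End Color.


Section Trail.
Variables (V E : finType) (inc : E -> {set V}).

Lemma walk_cat v s1 s2 : is_walk inc v (s1 ++ s2) =
  is_walk inc v s1 && is_walk inc (last v (map snd s1)) s2.
Proof. by elim: s1 v => [|[e w] s1 IH] v //=; rewrite IH !andbA. Qed.

Lemma trail_of_fun (s : seq E) (e0 : E) (f : nat -> V) :
  1 < size s -> uniq s ->
  (forall i, i < size s -> f i \in inc (nth e0 s i) :&: inc (nth e0 s (i.+1 %% size s))) ->
  (forall i, i < size s -> f i != f (i.+1 %% size s)) ->
  exists v t, closed_strict_trail inc v t /\ walk_edges t = s.
Proof.
set k := size s => k1 us hf hd.
pose t := [seq (nth e0 s i, f i) | i <- iota 0 k].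
have we : walk_edges t = s.
  by rewrite /walk_edges /t -map_comp; apply: (mkseq_nth e0 s).
exists (f k.-1), t; split => //.
have hw : forall n j, j + n <= k ->
    is_walk inc (if j is j'.+1 then f j' else f k.-1) [seq (nth e0 s i, f i) | i <- iota j n].
  elim=> [//|n IH] j jn /=.
  have /= -> := IH j.+1 ltac:(lia).
  have jk : j < k by lia.
  have /setIP [fj _] := hf j jk.
  case: j jn jk fj => [|j] jn jk fj.
    have := hd k.-1 ltac:(lia); have /setIP [_] := hf k.-1 ltac:(lia).
    rewrite (_ : k.-1.+1 = k); last lia.
    by rewrite modnn => -> ->; rewrite fj.
  have := hd j ltac:(lia); have /setIP [_] := hf j ltac:(lia).
  by rewrite modn_small // => -> ->; rewrite fj.
apply/and4P; split.
- exact: (hw k 0).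
- by rewrite size_map size_iota.
- rewrite /t -map_comp /=.
  rewrite (_ : k = k.-1 + 1); last lia.
  by rewrite iotaD map_cat last_cat /= add0n addn1.
- by rewrite we.
Qed.

Lemma cycle_nth (T : eqType) (r : rel T) (s : seq T) (x0 : T) : cycle r s ->
  forall i, i < size s -> r (nth x0 s i) (nth x0 s (i.+1 %% size s)).
Proof.
case: s => [//|x s] /= /(pathP x0) H i ik.
have := H i; rewrite size_rcons => /(_ ik).
rewrite nth_rcons /=.
case: (ltnP i (size s)) => h.
  rewrite modn_small //.
  case: i ik h => [|i] ik h //=.
  by rewrite -cats1 nth_cat (_ : (i < size s) = true) //; lia.
have e : i = size s by lia.
subst i; rewrite eqxx modnn /=.
case: s {H ik h} => [//|y s] /=.
by rewrite -cats1 -cat_cons nth_cat /= ltnSn.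
Qed.

End Trail.


Lemma modS_cases i k : 0 < k -> i < k ->
  (i.+1 < k /\ i.+1 %% k = i.+1) \/ (i.+1 = k /\ i.+1 %% k = 0).
Proof.
move=> k0 ik; case: (ltnP i.+1 k) => h; first by left; rewrite modn_small.
right; have e : i.+1 = k by lia.
by rewrite e modnn.
Qed.

Section Trail2.
Variables (V E : finType) (inc : E -> {set V}).

Definition LL (s : seq E) (e0 : E) (i : nat) :=
  inc (nth e0 s i) :&: inc (nth e0 s (i.+1 %% size s)).

Lemma trail_c (L : rel E) s : (forall e f, L e f -> 2 < #|inc e :&: inc f|) ->
  uniq s -> 1 < size s -> cycle L s ->
  exists v t, closed_strict_trail inc v t /\ walk_edges t = s.
Proof.
move=> hL us s1 cs; case: s s1 us cs => [//|e0 s'] s1 us cs.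
have [f [f1 f2]] := @color3 V (size (e0 :: s')) (LL (e0 :: s') e0) s1
  (fun i ik => hL _ _ (cycle_nth e0 cs ik)).
exact: (trail_of_fun (e0 := e0) (f := f)).
Qed.

Lemma trail_b (L : rel E) s : (forall e f, L e f -> 1 < #|inc e :&: inc f|) ->
  uniq s -> 1 < size s -> ~~ odd (size s) -> cycle L s ->
  exists v t, closed_strict_trail inc v t /\ walk_edges t = s.
Proof.
move=> hL us s1 ev cs; case: s s1 us cs ev => [//|e0 s'] s1 us cs ev.
have [f [f1 f2]] := @color2 V (size (e0 :: s')) (LL (e0 :: s') e0) (ltn0Sn _) ev
  (fun i ik => hL _ _ (cycle_nth e0 cs ik)).
exact: (trail_of_fun (e0 := e0) (f := f)).
Qed.

Lemma three_deg v a b c : a != b -> a != c -> b != c ->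
  v \in inc a -> v \in inc b -> v \in inc c -> 3 <= hdeg inc v.
Proof.
move=> ab ac bc va vb vc; rewrite /hdeg.
have -> : 3 = #|a |: (b |: [set c])|.
  by rewrite cardsU1 cardsU1 cards1 !inE negb_or ab ac bc.
apply: subset_leq_card; apply/subsetP => x; rewrite !inE.
by case/or3P => /eqP ->.
Qed.

Lemma trail_a (L : rel E) s : (forall v, hdeg inc v <= 2) ->
  (forall e f, L e f -> inc e :&: inc f != set0) ->
  uniq s -> 2 < size s -> cycle L s ->
  exists v t, closed_strict_trail inc v t /\ walk_edges t = s.
Proof.
move=> hdg hL us s1 cs; case: s s1 us cs => [//|e0 s'] s1 us cs.
set k := size (e0 :: s') in s1 *.
have ne : forall i, i < k -> exists x, x \in LL (e0 :: s') e0 i.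
  by move=> i ik; apply/set0Pn; apply: hL (cycle_nth e0 cs ik).
have [v0 _] := ne 0 ltac:(lia).
pose f i := odflt v0 [pick x in LL (e0 :: s') e0 i].
have f1 : forall i, i < k -> f i \in LL (e0 :: s') e0 i.
  move=> i ik; rewrite /f; case: pickP => [x //|H].
  by have [x hx] := ne i ik; move: (H x); rewrite hx.
apply: (trail_of_fun (e0 := e0) (f := f)) => //; first by rewrite -/k; lia.
rewrite -/k.
move=> i ik; apply/negP => /eqP E1.
have k0 : 0 < k by lia.
set j1 := i.+1 %% k in E1.
set j2 := j1.+1 %% k.
have j1k : j1 < k by rewrite ltn_pmod.
have /setIP [h0 h1] := f1 i ik.
have /setIP [h1' h2] := f1 j1 j1k.
rewrite -/j1 -E1 -/k -/j2 in h1 h1' h2.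
have j2k : j2 < k by rewrite ltn_pmod.
have d : [/\ i != j1, i != j2 & j1 != j2].
  rewrite /j2 /j1.
  case: (modS_cases k0 ik) => -[h ->].
    by case: (modS_cases k0 h) => -[h' ->]; split; apply/eqP; lia.
  by rewrite (modn_small (_ : 1 < k)); [split; apply/eqP; lia | lia].
case: d => d1 d2 d3.
have u : forall a b, a < k -> b < k -> a != b ->
    nth e0 (e0 :: s') a != nth e0 (e0 :: s') b.
  by move=> a b ak bk ab; rewrite nth_uniq.
have := three_deg (u _ _ ik j1k d1) (u _ _ ik j2k d2) (u _ _ j1k j2k d3) h0 h1' h2.
by have := hdg (f i); lia.
Qed.

End Trail2.


Lemma not_pairwise (T : eqType) (r : rel T) s : ~~ pairwise r s ->
  exists t1 t2 s', perm_eq s (t1 :: t2 :: s') /\ ~~ r t1 t2.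
Proof.
elim: s => [//|x s IH] /=; rewrite negb_and; case/orP.
  case/allPn => y ys nr; exists x, y, (rem y s); split => //.
  by rewrite perm_cons perm_to_rem.
case/IH => t1 [t2 [s' [p nr]]]; exists t1, t2, (x :: s'); split => //.
apply: perm_trans (_ : perm_eq _ ([:: x] ++ [:: t1; t2] ++ s')) _.
  by rewrite /= perm_cons.
by rewrite perm_catCA.
Qed.

Section Merge.
Variables (V E : finType) (inc : E -> {set V}).

Lemma rotate_trail v s w : closed_strict_trail inc v s -> w \in anchors v s ->
  exists s', closed_strict_trail inc w s' /\ perm_eq (walk_edges s') (walk_edges s).
Proof.
move=> ct; rewrite inE; case/orP => [/eqP ->|]; first by exists s.
case/mapP => p ps ->.
case/splitPr: ps ct => s1 s2 /and4P [wk sz lst un].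
exists (s2 ++ rcons s1 p).
have e1 : last v (map snd (rcons s1 p)) = p.2 by rewrite map_rcons last_rcons.
move: wk sz lst un; rewrite -cat_rcons walk_cat e1 => /andP [w1 w2] sz lst un.
have e2 : last p.2 (map snd s2) = v by move: lst; rewrite map_cat last_cat e1 => /eqP.
have pe : perm_eq (walk_edges (s2 ++ rcons s1 p)) (walk_edges (rcons s1 p ++ s2)).
  by rewrite /walk_edges !map_cat perm_catC.
split => //; apply/and4P; split.
- by rewrite walk_cat w2 e2.
- by move: sz; rewrite !size_cat addnC.
- by rewrite map_cat last_cat map_rcons !last_rcons.
- by rewrite (perm_uniq pe).
Qed.

Lemma merge_family n (Fm : seq (V * seq (E * V))) : size Fm <= n ->
  all (fun t => closed_strict_trail inc t.1 t.2) Fm ->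
  (forall e, count (fun t => e \in walk_edges t.2) Fm = 1) ->
  quasi_eulerian inc.
Proof.
elim: n Fm => [|n IH] Fm.
  rewrite leqn0 => /nilP -> _ cnt; exists [::]; split => //.
move=> sz ac cnt.
case: (boolP (pairwise (fun t1 t2 => [disjoint anchors t1.1 t1.2 & anchors t2.1 t2.2]) Fm)) => pw.
  by exists Fm; split.
case/not_pairwise: pw => -[v1 s1] [[v2 s2] [F' [pF nd]]].
move: nd; rewrite /= disjoint_has negbK => /hasP [w w1 w2].
have := ac; rewrite (perm_all _ pF) /= => /and3P [c1 c2 cF].
have [s1' [c1' p1]] := rotate_trail c1 w1.
have [s2' [c2' p2]] := rotate_trail c2 w2.
have cnt' : forall e, count (fun t => e \in walk_edges t.2) ((v1, s1) :: (v2, s2) :: F') = 1.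
  by move=> e; rewrite -(permP pF).
have dj : forall e, e \in walk_edges s1' -> e \in walk_edges s2' -> False.
  move=> e; rewrite (perm_mem p1) (perm_mem p2) => h1 h2.
  by have := cnt' e; rewrite /= h1 h2.
apply: (IH ((w, s1' ++ s2') :: F')).
- by move: sz; rewrite (perm_size pF) /=.
- rewrite /= cF andbT; move: c1' c2' => /and4P [wk1 sz1 l1 u1] /and4P [wk2 sz2 l2 u2].
  apply/and4P; split.
  + by rewrite walk_cat wk1 (eqP l1).
  + by rewrite size_cat (leq_trans sz1) // leq_addr.
  + by rewrite map_cat last_cat (eqP l1).
  + rewrite /walk_edges map_cat cat_uniq; rewrite -/(walk_edges s1') -/(walk_edges s2') u1 u2 /= andbT.
    by apply/hasPn => e h2; apply/negP => h1; apply: (dj e).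
- move=> e; have := cnt' e; rewrite /= /walk_edges map_cat mem_cat -/(walk_edges s1') -/(walk_edges s2') -/(walk_edges s1) -/(walk_edges s2).
  rewrite -(perm_mem p1) -(perm_mem p2).
  case h1: (e \in walk_edges s1'); case h2: (e \in walk_edges s2') => //=; by case: (dj e).
Qed.

Lemma qe_of_cycles (Cs : seq (seq E)) :
  (forall c, c \in Cs -> exists v t, closed_strict_trail inc v t /\ walk_edges t = c) ->
  (forall e, count (fun c => e \in c) Cs = 1) -> quasi_eulerian inc.
Proof.
move=> hC cnt.
have [Fm [aF cF]] : exists Fm : seq (V * seq (E * V)),
    all (fun t => closed_strict_trail inc t.1 t.2) Fm /\
    forall e, count (fun t => e \in walk_edges t.2) Fm = count (fun c => e \in c) Cs.
  elim: Cs hC {cnt} => [|c Cs IH] hC; first by exists [::].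
  have [v [t [ct we]]] := hC c (mem_head _ _).
  have [Fm [aF cF]] := IH (fun c' h => hC c' ltac:(by rewrite inE h orbT)).
  by exists ((v, t) :: Fm); split => [/=|e /=]; rewrite ?aF ?ct ?cF ?we.
apply: (merge_family (leqnn (size Fm)) aF) => e.
by rewrite cF cnt.
Qed.

End Merge.


Section Decomp.
Variables (T : finType) (F : rel T).
Hypothesis Fsym : symmetric F.
Hypothesis Firr : forall x, F x x = false.
Hypothesis Hdeg : forall x, sdeg F x = 1 \/ sdeg F x = 2.
Hypothesis Hcomp : forall x y, F x y -> sdeg F x = sdeg F y.

Lemma sdeg1_uniq z a b : sdeg F z = 1 -> F z a -> F z b -> a = b.
Proof.
move=> d za zb; apply/eqP; apply: contraT => ab.
have : #|[set a; b]| <= sdeg F z.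
  apply: subset_leq_card; apply/subsetP => w; rewrite !inE.
  by case/orP => /eqP ->.
by rewrite cards2 ab d.
Qed.

Lemma no3 z a b c : sdeg F z = 2 -> F z a -> F z b -> F z c ->
  a != b -> a != c -> b != c -> False.
Proof.
move=> d za zb zc ab ac bc.
have : #|a |: (b |: [set c])| <= sdeg F z.
  apply: subset_leq_card; apply/subsetP => w; rewrite !inE.
  by case/or3P => /eqP ->.
by rewrite cardsU1 cardsU1 cards1 !inE negb_or ab ac bc d.
Qed.

Lemma deg_path x p : path F x p -> forall z, z \in p -> sdeg F z = sdeg F x.
Proof.
elim: p x => [//|y p IH] x /= /andP [xy pp] z; rewrite inE => /orP [/eqP ->|zp].
  by rewrite (Hcomp xy).
by rewrite (IH y pp z zp) (Hcomp xy).
Qed.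

Lemma cycle_closed c : uniq c -> cycle F c -> 2 < size c ->
  (forall z, z \in c -> sdeg F z = 2) -> forall z y, z \in c -> F z y -> y \in c.
Proof.
move=> uc cc sc dc z y zc zy; apply: contraT => yc.
case: c uc cc sc dc zc yc => [//|x0 c'] uc cc sc dc zc yc.
set n := size (x0 :: c') in sc.
have n0 : 0 < n by lia.
have [i [ik ez]] : exists i, i < n /\ nth x0 (x0 :: c') i = z.
  by exists (index z (x0 :: c')); rewrite index_mem nth_index.
have [pi [pik epi]] : exists pi, pi < n /\ pi.+1 %% n = i.
  case: (i) ik => [|i'] ik; [exists n.-1 | exists i'].
    by rewrite (_ : n.-1.+1 = n) ?modnn //; split; lia.
  by rewrite modn_small //; split; lia.
have h1 := cycle_nth x0 cc ik; rewrite -/n ez in h1.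
have h2 := cycle_nth x0 cc pik; rewrite -/n epi ez Fsym in h2.
have u : forall a b, a < n -> b < n -> a != b ->
    nth x0 (x0 :: c') a != nth x0 (x0 :: c') b.
  by move=> a b ak bk ab; rewrite nth_uniq.
have ny : forall a, a < n -> nth x0 (x0 :: c') a != y.
  by move=> a ak; apply: contraNneq yc => <-; rewrite mem_nth.
exfalso; apply: (no3 (dc z zc) h1 h2 zy).
- apply: u; [by rewrite ltn_pmod | done |].
  move: epi; case: (modS_cases n0 pik) => -[h ->] e; case: (modS_cases n0 ik) => -[h' ->]; apply/eqP; lia.
- exact: ny (ltn_pmod _ n0).
- exact: ny.
Qed.

Lemma find_cycle x : exists p, [/\ uniq (x :: p), cycle F (x :: p), 1 < size (x :: p),
  (size (x :: p) = 2 -> sdeg F x = 1) & forall z y, z \in x :: p -> F z y -> y \in x :: p].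
Proof.
case: (Hdeg x) => dx.
  have [y] : exists y, y \in [set y | F x y] by apply/card_gt0P; rewrite -/(sdeg F x) dx.
  rewrite inE => xy.
  have dy : sdeg F y = 1 by rewrite -(Hcomp xy).
  exists [:: y]; split => //=.
  - by rewrite inE andbT; apply: contraTneq xy => ->; rewrite Firr.
  - by rewrite xy Fsym xy.
  - move=> z w; rewrite !inE => /orP [/eqP ->|/eqP ->] h.
      by rewrite (sdeg1_uniq dx h xy) eqxx orbT.
    by rewrite (sdeg1_uniq dy h (_ : F y x)) ?eqxx // Fsym.
pose P n := [exists t : n.-tuple T, uniq (x :: t) && path F x t].
have exP : exists n, P n by exists 0; apply/existsP; exists [tuple].
have ubP : forall n, P n -> n <= #|T|.
  move=> n /existsP [t /andP [ut _]].
  have := max_card (mem (x :: t)); rewrite (card_uniqP ut) /= size_tuple; lia.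
case: (ex_maxnP exP ubP) => m /existsP [t /andP [ut pt]] maxm.
set p := val t in ut pt.
have sp : size p = m by rewrite /p size_tuple.
have noext : forall y, F (last x p) y -> y \in x :: p.
  move=> y ly; apply: contraT => yn.
  have hP : P (size (rcons p y)).
    apply/existsP; exists (in_tuple (rcons p y)) => /=.
    move: ut yn => /= /andP [xp up]; rewrite inE negb_or => /andP [yx yp].
    by rewrite mem_rcons inE negb_or xp eq_sym yx rcons_uniq yp up rcons_path pt ly.
  by have := maxm _ hP; rewrite size_rcons sp ltnn.
have dq : forall z, z \in x :: p -> sdeg F z = 2.
  by move=> z; rewrite inE => /orP [/eqP ->|zp] //; rewrite (deg_path pt zp).
have dl : sdeg F (last x p) = 2 by apply: dq; apply: mem_last.
have m1 : 0 < m.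
  rewrite -sp lt0n; apply/negP => /eqP /size0nil sp0; rewrite sp0 in dl noext.
  have [y] : exists y, y \in [set y | F x y] by apply/card_gt0P; rewrite -/(sdeg F x) dl.
  rewrite inE => xy; have := noext y xy; rewrite inE => /eqP yx.
  by move: xy; rewrite yx Firr.
set q := x :: p.
have nq : forall i, nth x q i.+1 = nth x p i by [].
have pP : forall i, i < m -> F (nth x q i) (nth x p i) by move/(pathP x): pt; rewrite sp.
have eu : nth x q m = last x p by rewrite -(nth_last x p) sp; case: (m) m1.
have hpu : F (last x p) (nth x q m.-1).
  by rewrite Fsym -eu; case: (m) m1 pP => [//|m'] _ pP'; exact: pP' m' (ltnSn _).
have h2 : 1 < #|[set y | F (last x p) y]| by rewrite -/(sdeg F _) dl.
have [y uy ny] := other (nth x q m.-1) h2.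
rewrite inE in uy.
have yq := noext y uy.
have uqq : uniq q by [].
set j := index y q.
have jk : j < m.+1 by rewrite -sp -/(size q) index_mem.
have ey : nth x q j = y by rewrite nth_index.
have u : forall a b, a < m.+1 -> b < m.+1 -> a != b -> nth x q a != nth x q b.
  by move=> a b ak bk ab; rewrite nth_uniq // /q /= sp.
have jm : j != m.
  by apply: contraTneq uy => e; rewrite -ey e eu Firr.
have jm1 : j != m.-1 by apply: contraNneq ny => e; rewrite -ey e.
have j0 : j = 0.
  apply/eqP; apply: contraT => j0.
  have zj : F (nth x q j) (nth x q j.+1) by rewrite nq pP //; lia.
  have zj' : F (nth x q j) (nth x q j.-1).
    by rewrite Fsym {2}(_ : j = j.-1.+1) ?nq ?pP //; lia.
  have zu : F (nth x q j) (nth x q m) by rewrite ey eu Fsym.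
  exfalso; apply: (no3 (dq _ (mem_nth x (_ : j < size q))) zj zj' zu).
  - by rewrite /q /= sp.
  - by apply: u; lia.
  - by apply: u; lia.
  - by apply: u; lia.
have yx : y = x by rewrite -ey j0.
have m2 : 1 < m.
  by move: jm jm1; rewrite j0; case: (m) m1 => [|[|]].
have ux : F (last x p) x by move: uy; rewrite yx.
have cq : cycle F q by rewrite /q /= rcons_path pt ux.
exists p; split => //.
- by rewrite /= sp; lia.
- by rewrite /= sp => e; lia.
- apply: cycle_closed => //; by rewrite /q /= sp.
Qed.

Lemma path_in (D : {set T}) x p : path F x p -> x \in D ->
  (forall z y, z \in D -> F z y -> y \in D) -> forall z, z \in p -> z \in D.
Proof.
move=> + + cD; elim: p x => [//|y p IH] x /= /andP [xy pp] xD z.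
rewrite inE => /orP [/eqP ->|zp]; first exact: cD xy.
exact: IH pp (cD _ _ xD xy) z zp.
Qed.

Lemma decomp n (D : {set T}) : #|D| <= n ->
  (forall z y, z \in D -> F z y -> y \in D) ->
  exists Cs : seq (seq T),
    (forall c, c \in Cs -> [/\ uniq c, cycle F c, 1 < size c &
                               (size c = 2 -> exists z, sdeg F z = 1)]) /\
    forall z, count (fun c => z \in c) Cs = (z \in D).
Proof.
elim: n D => [|n IH] D.
  rewrite leqn0 cards_eq0 => /eqP -> _; exists [::]; split => // z.
  by rewrite inE.
move=> sD cD.
case: (set_0Vmem D) => [-> | [x xD]].
  by exists [::]; split => // z; rewrite inE.
have [p [up cp sp s2 clp]] := find_cycle x.
have pD : forall z, z \in x :: p -> z \in D.
  move=> z; rewrite inE => /orP [/eqP -> //|zp].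
  apply: (path_in (x := x) (p := p)) => //.
  by move: cp; rewrite /= rcons_path => /andP [].
pose D' := D :\: [set z in x :: p].
have cD' : forall z y, z \in D' -> F z y -> y \in D'.
  move=> z y; rewrite !inE => /andP [zc zD] zy.
  rewrite (cD _ _ zD zy) andbT; apply: contra zc => yc.
  by apply: (clp y) => //; rewrite Fsym.
have sD' : #|D'| <= n.
  have := cardsID [set z in x :: p] D.
  have : 0 < #|D :&: [set z in x :: p]|.
    by apply/card_gt0P; exists x; rewrite !inE xD eqxx.
  rewrite -/D'; lia.
have [Cs [hC cC]] := IH D' sD' cD'.
exists ((x :: p) :: Cs); split.
  move=> c; rewrite inE => /orP [/eqP -> |]; last exact: hC.
  by split => // e; exists x; apply: s2.
move=> z /=; rewrite cC !inE.
have := pD z; rewrite inE.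
by case: ((z == x) || (z \in p)) => [h|_] /=; [rewrite (h isT) | rewrite add0n].
Qed.

End Decomp.


Lemma bip_even (T : Type) (r : rel T) (c : T -> bool) :
  (forall x y, r x y -> c x != c y) -> forall s, cycle r s -> ~~ odd (size s).
Proof.
move=> hc; have hp : forall x p, path r x p -> c (last x p) = c x (+) odd (size p).
  move=> x p; elim: p x => [|y p IH] x /=; first by rewrite addbF.
  case/andP => /hc xy /IH ->.
  by move: xy; case: (c x); case: (c y); case: (odd (size p)).
case=> [//|x s] /= /hp; rewrite last_rcons size_rcons /=.
by case: (c x); case: (odd (size s)).
Qed.

Lemma qe_from_F (V E : finType) (inc : E -> {set V}) (F L : rel E) :
  spanning_subgraph L F ->
  (forall x, sdeg F x = 1 \/ sdeg F x = 2) ->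
  (forall x y, F x y -> sdeg F x = sdeg F y) ->
  (forall e, L e e = false) ->
  (forall c : seq E, uniq c -> cycle L c -> 1 < size c ->
     (size c = 2 -> exists z, sdeg F z = 1) ->
     exists v t, closed_strict_trail inc v t /\ walk_edges t = c) ->
  quasi_eulerian inc.
Proof.
move=> [Fsym FL] hd hc Lirr prod.
have Firr : forall x, F x x = false by move=> x; apply/negP => /FL; rewrite Lirr.
have [Cs [hC cC]] := @decomp E F Fsym Firr hd hc #|[set: E]| [set: E] (leqnn _)
  (fun _ _ _ _ => in_setT _).
apply: (qe_of_cycles (Cs := Cs)).
  move=> c cin; have [uc cc sc s2] := hC c cin.
  by apply: prod => //; apply: sub_cycle cc.
by move=> e; rewrite cC in_setT.
Qed.

Unset Implicit Arguments.

Theorem theorem2p14 (V E : finType) (inc : E -> {set V})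
  (HV : 0 < #|V|) (Hne : forall e : E, inc e != set0) (L : rel E) :
  let case_a := (forall v : V, hdeg inc v <= 2) /\ L =2 intersection_graph inc in
  let case_b := L =2 Lstar inc 2 /\ bipartite L in
  let case_c := L =2 Lstar inc 3 in
  case_a \/ case_b \/ case_c ->
  [/\ (hamiltonian L -> eulerian inc),
      (has_2factor L -> quasi_eulerian inc)
    & (case_b \/ case_c -> has_12factor L -> quasi_eulerian inc)].
Proof.
move=> ca cb cc H.
have Lirr : forall e, L e e = false.
  move=> e; case: H => [[_ ->]|[[-> _]|->]]; by rewrite /intersection_graph /Lstar eqxx.
have ha : ca -> forall e f, L e f -> inc e :&: inc f != set0.
  by move=> [_ h] e f; rewrite h => /andP [].
have hb : cb -> forall e f, L e f -> 1 < #|inc e :&: inc f|.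
  by move=> [h _] e f; rewrite h => /andP [].
have hbe : cb -> forall s, cycle L s -> ~~ odd (size s).
  by move=> [_ [c hc]]; apply: bip_even hc.
have hc : cc -> forall e f, L e f -> 2 < #|inc e :&: inc f|.
  by move=> h e f; rewrite h => /andP [].
split.
- move=> [s [us ss alls cs]].
  have [v [t [ct we]]] : exists v t, closed_strict_trail inc v t /\ walk_edges t = s.
    case: H => [a|[b|c]].
    + exact: (trail_a (proj1 a) (ha a) us ss cs).
    + exact: (trail_b (hb b) us (ltnW ss) (hbe b s cs) cs).
    + exact: (trail_c (hc c) us (ltnW ss) cs).
  by exists v, t; split => // e; rewrite we.
- move=> [F [sF dF]].
  apply: (qe_from_F (L := L) (F := F)) => //.
  + by move=> x; right.
  + by move=> x y _; rewrite !dF.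
  + move=> c uc cL sc s2.
    have s3 : 2 < size c.
      rewrite ltn_neqAle sc andbT; apply/eqP => e.
      by case: (s2 (esym e)) => z; rewrite dF.
    case: H => [a|[b|c']].
    * exact: (trail_a (proj1 a) (ha a) uc s3 cL).
    * exact: (trail_b (hb b) uc sc (hbe b c cL) cL).
    * exact: (trail_c (hc c') uc sc cL).
- move=> Hbc [F [sF dF cF]].
  apply: (qe_from_F (L := L) (F := F)) => //.
  + by move=> x y xy; apply: cF; apply: connect1.
  + move=> c uc cL sc s2.
    case: Hbc => [b|c'].
    * exact: (trail_b (hb b) uc sc (hbe b c cL) cL).
    * exact: (trail_c (hc c') uc sc cL).
Qed.
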